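(* Let $k$ be a field of prime characteristic $p$, and let $V_1,V_2,\ldots$ be a sequence of $T$-spaces of $k_0\langle X\rangle$ such that (a) $(V_iV_j)^S=V_{i+j}$ for all $i,j\ge1$, and (b) $V_{2m+1}\subseteq V_{m+1}+V_1$ for all $m\ge1$. Then for any integers $r,s$ with $0<r<s$, we have $V_{s+t(s-r)}\subseteq V_r+V_s$ for all integers $t\ge0$.
   Context: $X=\{x_1,x_2,\ldots\}$ is a countably infinite set and $k_0\langle X\rangle$ denotes the free associative (non-unital) $k$-algebra on $X$. A $T$-space is a $k$-subspace of $k_0\langle X\rangle$ invariant under every algebra endomorphism of $k_0\langle X\rangle$ (i.e. closed under substitution of arbitrary elements of $k_0\langle X\rangle$ for the variables). For a subset $A$, $A^S$ (or $(A)^S$) denotes the $T$-space generated by $A$. For subsets $A,B$, $AB$ denotes the set of products $\{ab: a\in A, b\in B\}$. Sums of $T$-spaces are sums of subspaces. *)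

(* Defs.v *)
From HB Require Import structures.
From mathcomp Require Import all_boot all_algebra.
From mathcomp Require Import finmap.
From mathcomp.multinomials Require Import monalg.
Set Implicit Arguments.
Unset Strict Implicit.
Unset Printing Implicit Defensive.
Import GRing.Theory.
Local Open Scope ring_scope.

(* The free associative unital algebra k<X> on X = {x_0, x_1, ...}:
   finitely supported k-linear combinations of words over nat
   (free monoid {fmonom nat}, multiplication = concatenation). *)
Definition kX (k : fieldType) := {malg k[{fmonom nat}]}.

Definition word1 : {fmonom nat} := mone.

(* k_0<X>: the non-unital free algebra = elements with zero constant term. *)
Definition nonunital (k : fieldType) (f : kX k) : Prop := f@_word1 = 0.

Definition subst (k : fieldType) (sigma : nat -> kX k) (f : kX k) : kX k :=
  \sum_(m <- msupp f) f@_m *: \prod_(i <- fmonom_val m) sigma i.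

Definition subspace (k : fieldType) (V : kX k -> Prop) : Prop :=
  [/\ forall f, V f -> nonunital f,
      V 0,
      forall f g, V f -> V g -> V (f + g) &
      forall (c : k) f, V f -> V (c *: f)].

(* T-space: subspace of k_0<X> closed under every endomorphism of k_0<X>,
   i.e. under substitution of arbitrary elements of k_0<X> for the variables. *)
Definition Tspace (k : fieldType) (V : kX k -> Prop) : Prop :=
  subspace V /\
  forall sigma : nat -> kX k, (forall i, nonunital (sigma i)) ->
    forall f, V f -> V (subst sigma f).

(* (A)^S: the T-space generated by A (intersection of all T-spaces containing A). *)
Definition Tgen (k : fieldType) (A : kX k -> Prop) : kX k -> Prop :=
  fun f => forall W, Tspace W -> (forall g, A g -> W g) -> W f.

Definition prodset (k : fieldType) (A B : kX k -> Prop) : kX k -> Prop :=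
  fun f => exists a b, [/\ A a, B b & f = a * b].

Definition sumset (k : fieldType) (A B : kX k -> Prop) : kX k -> Prop :=
  fun f => exists a b, [/\ A a, B b & f = a + b].

Definition Tsubset (k : fieldType) (A B : kX k -> Prop) : Prop :=
  forall f, A f -> B f.

(* Main.v *)
Require Import Defs.
From mathcomp Require Import all_boot all_algebra.
From mathcomp Require Import finmap.
From mathcomp.multinomials Require Import monalg.
From mathcomp Require Import zify.
Local Open Scope ring_scope.
Import GRing.Theory.

Section Aux.
Variable k : fieldType.

Lemma substEw (sigma : nat -> kX k) (f : kX k) (d : {fset {fmonom nat}}) :
  (msupp f `<=` d)%fset ->
  subst sigma f = \sum_(m <- d) f@_m *: \prod_(i <- fmonom_val m) sigma i.
Proof.
move=> le; rewrite /subst [LHS](big_fset_incl _ le) => //= x xd /mcoeff_outdom ->.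
by rewrite scale0r.
Qed.

Lemma substD (sigma : nat -> kX k) (a b : kX k) :
  subst sigma (a + b) = subst sigma a + subst sigma b.
Proof.
have h1 : (msupp (a + b) `<=` msupp a `|` msupp b)%fset by apply: msuppD_le.
have h2 : (msupp a `<=` msupp a `|` msupp b)%fset by apply: fsubsetUl.
have h3 : (msupp b `<=` msupp a `|` msupp b)%fset by apply: fsubsetUr.
rewrite (substEw sigma _ _ h1) (substEw sigma _ _ h2) (substEw sigma _ _ h3) -big_split /=.
by apply: eq_bigr => m _; rewrite mcoeffD scalerDl.
Qed.

Lemma Tspace_sum (A B : kX k -> Prop) : Tspace A -> Tspace B -> Tspace (sumset A B).
Proof.
move=> [[A1 A2 A3 A4] A5] [[B1 B2 B3 B4] B5]; split; first split.
- move=> f [a [b [Ha Hb ->]]]; rewrite /nonunital mcoeffD.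
  by rewrite (A1 _ Ha) (B1 _ Hb) addr0.
- by exists 0, 0; rewrite addr0.
- move=> f g [a [b [Ha Hb ->]]] [a' [b' [Ha' Hb' ->]]].
  exists (a + a'), (b + b'); split; [exact: A3 | exact: B3 | by rewrite addrACA].
- move=> c f [a [b [Ha Hb ->]]]; exists (c *: a), (c *: b); split;
  [exact: A4 | exact: B4 | by rewrite scalerDr].
- move=> sigma hs f [a [b [Ha Hb ->]]]; exists (subst sigma a), (subst sigma b).
  split; [exact: A5 | exact: B5 | exact: substD].
Qed.

End Aux.

Theorem lemma2p1 (k : fieldType) (p : nat) (hp : prime p)
  (hchar : p \in [pchar k]) (V : nat -> kX k -> Prop)
  (hT : forall i, (1 <= i)%N -> Tspace (V i))
  (ha : forall i j, (1 <= i)%N -> (1 <= j)%N ->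
        forall f, Tgen (prodset (V i) (V j)) f <-> V (i + j)%N f)
  (hb : forall m, (1 <= m)%N -> Tsubset (V (2 * m + 1)%N) (sumset (V (m + 1)%N) (V 1%N))) :
  forall r s : nat, (0 < r)%N -> (r < s)%N ->
  forall t : nat, Tsubset (V (s + t * (s - r))%N) (sumset (V r) (V s)).
Proof.
have key : forall x m, (1 <= x)%N -> (1 <= m)%N ->
    Tsubset (V (x + 2 * m)%N) (sumset (V (x + m)%N) (V x)).
  move=> x m hx hm f Hf.
  case: (posnP (x - 1)) => hj.
  - have ex : x = 1%N by lia.
    subst x; move: (hb m hm f); rewrite addnC [(m + 1)%N]addnC; apply; by [].
  - have ex : (x + 2 * m = (2 * m + 1) + (x - 1))%N by lia.
    rewrite ex in Hf.
    have h2m : (1 <= 2 * m + 1)%N by lia.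
    have hj1 : (1 <= x - 1)%N by lia.
    move/(ha _ _ h2m hj1): Hf => Hf.
    apply: Hf.
      apply: Tspace_sum; apply: hT; lia.
    move=> g [a [b [Ha Hb ->]]].
    have [u [v [Hu Hv ->]]] := hb m hm a Ha.
    exists (u * b), (v * b); split; last by rewrite mulrDl.
    + have e : (x + m = (m + 1) + (x - 1))%N by lia.
      rewrite e; apply/(ha _ _ _ hj1); first lia.
      by move=> W _ HW; apply: HW; exists u, b.
    + have e : (x = 1 + (x - 1))%N by lia.
      rewrite e; apply/(ha _ _ _ hj1); first lia.
      by move=> W _ HW; apply: HW; exists v, b.
move=> r s hr hrs.
have hTS : Tspace (sumset (V r) (V s)) by apply: Tspace_sum; apply: hT; lia.
case: hTS => [[_ _ S3 _] _].
have hr0 : V r 0 by case: (hT r hr) => [[]].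
have hs0 : V s 0 by case: (hT s (ltn_trans hr hrs)) => [[]].
have claim : forall n n', (n' <= n)%N ->
    Tsubset (V (r + n' * (s - r))%N) (sumset (V r) (V s)).
  elim=> [|n IH] n' hn' f Hf.
  - have e : n' = 0%N by lia.
    subst n'; rewrite mul0n addn0 in Hf.
    by exists f, 0; rewrite addr0.
  - case: (leqP n' n) => hle; first exact: IH hle f Hf.
    have e : n' = n.+1 by lia.
    subst n'.
    case: n IH hn' hle Hf => [|n] IH _ _ Hf.
      have e : (r + 1 * (s - r) = s)%N by lia.
      rewrite e in Hf; by exists 0, f; rewrite add0r.
    have e : (r + n.+2 * (s - r) = (r + n * (s - r)) + 2 * (s - r))%N by lia.
    rewrite e in Hf.
    have [a [b [Ha Hb ->]]] := key (r + n * (s - r))%N (s - r)%N (ltac:(lia)) (ltac:(lia)) f Hf.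
    apply: S3.
    + apply: (IH n.+1) => //.
      have e2 : (r + n * (s - r) + (s - r) = r + n.+1 * (s - r))%N by lia.
      by rewrite -e2.
    + exact: (IH n).
move=> t f Hf.
apply: (claim t.+1 t.+1) => //.
have e : (s + t * (s - r) = r + t.+1 * (s - r))%N by lia.
by rewrite -e.
Qed.
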